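(* Let $K$ be a field, $S=K[x_1,\ldots,x_n]$, and let $I\subset S$ be any monomial ideal minimally generated by $q$ monomials. Then $\operatorname{pd}_S(I^2)\le\dim(\mathbb{M}_q^2)=\binom{q}{2}$.
   Context: $\operatorname{pd}_S$ denotes projective dimension over $S$ (length of the minimal free resolution). $\mathbb{M}_q^2$ is the simplicial complex on vertex set $\{\ell_{i,j}:1\le i\le j\le q\}$ with facets $\mathcal{M}_i=\{\ell_{a,b}:1\le a<b\le q\}\cup\{\ell_{i,i}\}$ for $i\in[q]$; its dimension is the maximal size of a face minus one. *)

(* Defs.v *)
From HB Require Import structures.
From mathcomp Require Import all_boot all_order all_algebra.
From mathcomp Require Import mpoly.
Set Implicit Arguments. Unset Strict Implicit. Unset Printing Implicit Defensive.
Import GRing.Theory.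
Local Open Scope ring_scope.

Definition ideal_gen (K : fieldType) (n : nat) (q : nat)
  (g : 'I_q -> {mpoly K[n]}) (f : {mpoly K[n]}) : Prop :=
  exists c : 'I_q -> {mpoly K[n]}, f = \sum_(i < q) c i * g i.

Definition ideal_sq (K : fieldType) (n : nat) (J : {mpoly K[n]} -> Prop)
  (f : {mpoly K[n]}) : Prop :=
  exists (k : nat) (a b : 'I_k -> {mpoly K[n]}),
    (forall i, J (a i) /\ J (b i)) /\ f = \sum_(i < k) a i * b i.

Definition mdivides (n : nat) (m1 m2 : 'X_{1..n}) : bool :=
  [forall i : 'I_n, m1 i <= m2 i]%N.

(* The monomials x^(m i), i < q, are a minimal generating set of the
   ideal they generate (for monomial ideals: none divides another). *)
Definition minimal_monomial_gens (n q : nat) (m : 'I_q -> 'X_{1..n}) : Prop :=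
  forall i j : 'I_q, i != j -> ~~ mdivides (m i) (m j).

(* A finite free resolution of length L of an ideal J, with row-vector
   convention: free modules S^(b i), maps v |-> v *m D i : S^(b i.+1) -> S^(b i),
   augmentation v |-> v *m e : S^(b 0) -> S, ranks b i = 0 for i > L:
     0 -> S^(b L) -> ... -> S^(b 0) -> J -> 0  exact. *)
Definition free_resolution (K : fieldType) (n : nat)
  (J : {mpoly K[n]} -> Prop) (L : nat) : Prop :=
  exists (b : nat -> nat) (e : 'cV[{mpoly K[n]}]_(b 0%N))
         (D : forall i : nat, 'M[{mpoly K[n]}]_(b i.+1, b i)),
    (forall i, (L < i)%N -> b i = 0%N) /\
    (forall f, J f <-> exists v : 'rV_(b 0%N), f = (v *m e) 0 0) /\
    (forall v : 'rV_(b 0%N), v *m e = 0 <-> exists w : 'rV_(b 1%N), v = w *m D 0%N) /\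
    (forall (i : nat) (v : 'rV_(b i.+1)),
        v *m D i = 0 <-> exists w : 'rV_(b i.+2), v = w *m D i.+1).

Definition pd_le (K : fieldType) (n : nat) (J : {mpoly K[n]} -> Prop) (k : nat) : Prop :=
  exists L, (L <= k)%N /\ free_resolution J L.

(* The simplicial complex M_q^2 on vertices l_{i,j} = (i,j), i <= j < q. *)
Definition Mq2_facet (q : nat) (i : 'I_q) : {set 'I_q * 'I_q} :=
  [set ab : 'I_q * 'I_q | ((nat_of_ord ab.1) < (nat_of_ord ab.2))%N || (ab == (i, i))].

Definition Mq2_face (q : nat) (F : {set 'I_q * 'I_q}) : bool :=
  [exists i : 'I_q, F \subset Mq2_facet i].

Definition Mq2_dim (q : nat) : nat :=
  (\max_(F : {set 'I_q * 'I_q} | Mq2_face F) #|F|).-1.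

(* Main.v *)
Require Import Defs.
From HB Require Import structures.
From mathcomp Require Import all_boot all_order all_algebra.
From mathcomp Require Import mpoly ring zify.
Set Implicit Arguments. Unset Strict Implicit. Unset Printing Implicit Defensive.
Import GRing.Theory.
Local Open Scope ring_scope.


Section Scalar.
Variable K : fieldType.
Variable V : finType.

Definition ltV (v w : V) := (enum_rank v < enum_rank w)%N.
Definition eps (v : V) (F : {set V}) : K := (-1) ^+ #|[set w in F | ltV w v]|.
Definition sg (b : bool) : K := if b then -1 else 1.

Lemma ltV_irr v : ltV v v = false.
Proof. by rewrite /ltV ltnn. Qed.

Lemma ltV_total v w : v != w -> ltV v w = ~~ ltV w v.
Proof.
move=> nvw; rewrite /ltV; case: ltngtP => // /val_inj /enum_rank_inj e.
by rewrite e eqxx in nvw.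
Qed.

Lemma eps_U v a (F : {set V}) : a \notin F -> eps v (a |: F) = sg (ltV a v) * eps v F.
Proof.
move=> aF; rewrite /eps /sg.
have -> : [set w in a |: F | ltV w v] =
  if ltV a v then a |: [set w in F | ltV w v] else [set w in F | ltV w v].
  case Hav: (ltV a v); apply/setP => w; rewrite !inE;
  case: (eqVneq w a) => [->|nwa] //=; by rewrite ?Hav ?(negbTE aF).
case: (ltV a v); last by rewrite mul1r.
rewrite cardsU1 inE (negbTE aF) /= exprS //.
Qed.

Lemma eps_self v (F : {set V}) : eps v (v |: F) = eps v F.
Proof.
rewrite /eps; suff -> : [set w in v |: F | ltV w v] = [set w in F | ltV w v] by [].
apply/setP => w; rewrite !inE.
by case: eqP => [->|]; rewrite ?ltV_irr ?andbF.
Qed.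

Lemma eps_D1 v (F : {set V}) : eps v (F :\ v) = eps v F.
Proof.
rewrite /eps; suff -> : [set w in F :\ v | ltV w v] = [set w in F | ltV w v] by [].
apply/setP => w; rewrite !inE.
by case: eqP => [->|]; rewrite ?ltV_irr ?andbF.
Qed.

Lemma eps_sq v (F : {set V}) : eps v F * eps v F = 1.
Proof. by rewrite /eps -exprD -signr_odd oddD addbb. Qed.

Lemma sg_pair v a : v != a -> sg (ltV a v) * sg (ltV v a) = -1.
Proof.
move=> nva; rewrite (ltV_total nva) /sg; case: (ltV a v) => /=;
by rewrite ?mulN1r ?mul1r ?opprK.
Qed.

Definition bd (g : {set V} -> K) (G : {set V}) : K :=
  \sum_(v | v \notin G) eps v (v |: G) * g (v |: G).
Definition hom (a : V) (g : {set V} -> K) (G : {set V}) : K :=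
  if a \in G then eps a G * g (G :\ a) else 0.

Lemma bd_eq g g' G : g =1 g' -> bd g G = bd g' G.
Proof. by move=> e; apply: eq_bigr => v _; rewrite e. Qed.

Lemma homotopy a g G : bd (hom a g) G + hom a (bd g) G = g G.
Proof.
rewrite /bd /hom; case: (boolP (a \in G)) => aG.
- have E : forall v, v \notin G -> eps v (v |: G) * (if a \in v |: G then eps a (v |: G) * g ((v |: G) :\ a) else 0)
     = - (eps a G * (eps v (v |: (G :\ a)) * g (v |: (G :\ a)))).
    move=> v vG; have nva : v != a by apply: contraNneq vG => ->.
    rewrite !inE aG orbT.
    have -> : (v |: G) :\ a = v |: (G :\ a).
      apply/setP => x; rewrite !inE; case: (eqVneq x a) => [->|nxa] /=; last by [].
      by rewrite eq_sym (negbTE nva).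
    rewrite eps_self eps_self eps_U //.
    have -> : eps v G = sg (ltV a v) * eps v (G :\ a).
      by rewrite -[in LHS](setD1K aG) eps_U // !inE eqxx.
    transitivity ((sg (ltV a v) * sg (ltV v a)) * (eps v (G :\ a) * eps a G * g (v |: G :\ a))).
      by rewrite !mulrA; congr (_ * _); rewrite -!mulrA; congr (_ * _); rewrite mulrCA !mulrA.
    by rewrite sg_pair // mulN1r mulrA [eps v _ * _]mulrC -mulrA.
  rewrite (eq_bigr _ E) sumrN.
  rewrite [X in _ * X](bigD1 a) /=; last by rewrite !inE eqxx.
  rewrite setD1K // mulrDr mulrA eps_sq mul1r addrCA.
  have -> : \sum_(i | (i \notin G :\ a) && (i != a)) eps i (i |: G :\ a) * g (i |: G :\ a)
          = \sum_(i | i \notin G) eps i (i |: G :\ a) * g (i |: G :\ a).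
    apply: eq_bigl => v; rewrite !inE; case: (eqVneq v a) => [->|] /=; by rewrite ?aG ?andbT.
  by rewrite -mulr_sumr addNr addr0.
- rewrite addr0 (bigD1 a) //= setU11 setU1K // eps_self mulrA eps_sq mul1r big1 ?addr0 //.
  move=> v /andP [vG nva]; rewrite !inE (negbTE aG) orbF eq_sym (negbTE nva).
  by rewrite mulr0.
Qed.

Lemma bdbd g G : bd (bd g) G = 0.
Proof.
rewrite /bd.
pose T (p : V * V) := eps p.1 (p.1 |: G) * (eps p.2 (p.2 |: (p.1 |: G)) * g (p.2 |: (p.1 |: G))).
pose P (p : V * V) := [&& p.1 \notin G, p.2 \notin G & p.1 != p.2].
have -> : \sum_(v | v \notin G) eps v (v |: G) *
     \sum_(w | w \notin v |: G) eps w (w |: (v |: G)) * g (w |: (v |: G))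
   = \sum_(p | P p) T p.
  under eq_bigr => v _ do rewrite mulr_sumr.
  rewrite pair_big_dep /=; apply: eq_bigl => -[v w]; rewrite /P /= !inE.
  rewrite negb_or [w == v]eq_sym; case: (v \in G); case: (w \in G); by rewrite /= ?andbF ?andbT.
have TN : forall p, P p -> T (p.2, p.1) = - T p.
  case=> v0 w0 /and3P [/= vG wG nvw]; rewrite /T /=.
  rewrite !eps_self.
  have -> : w0 |: (v0 |: G) = v0 |: (w0 |: G) by apply/setP=> x; rewrite !inE orbCA.
  rewrite !eps_U //.
  rewrite (ltV_total nvw) /sg; case: (ltV w0 v0) => /=; ring.
rewrite (bigID (fun p => ltV p.1 p.2)) /=.
rewrite [X in _ + X](reindex_inj (h := fun p : V * V => (p.2, p.1))); last first.
  by case=> a b [c d] /= [-> ->].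
rewrite /= -[RHS](subrr (\sum_(p | P p && ltV p.1 p.2) T p)); congr (_ + _).
rewrite -sumrN; apply: eq_big => [[v w]|[v w]] /=.
  rewrite /P /=; case: (eqVneq v w) => [->|nvw]; first by rewrite !andbF.
  by rewrite (ltV_total nvw); case: (v \in G); case: (w \in G).
by move=> /andP [Pp _]; rewrite (TN _ Pp) opprK.
Qed.

End Scalar.


Section Poly.
Variable K : fieldType.
Variable n : nat.
Variable V : finType.
Variable u : V -> 'X_{1..n}.

Definition lab (F : {set V}) : 'X_{1..n} := [multinom (\max_(v in F) u v i)%N | i < n].

Lemma lab_leP (F : {set V}) (a : 'X_{1..n}) :
  reflect (forall v, v \in F -> (u v <= a)%MM) (lab F <= a)%MM.
Proof.
apply: (iffP mnm_lepP) => [H v vF|H i].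
  apply/mnm_lepP => i; have := H i; rewrite mnmE => /bigmax_leqP; apply.
  exact: vF.
rewrite mnmE; apply/bigmax_leqP => v vF; exact/mnm_lepP/H.
Qed.

Lemma u_le_lab v (F : {set V}) : v \in F -> (u v <= lab F)%MM.
Proof. by move=> vF; apply/mnm_lepP => i; rewrite mnmE (leq_bigmax_cond _ vF). Qed.

Lemma lab_sub (F G : {set V}) : F \subset G -> (lab F <= lab G)%MM.
Proof. by move=> /subsetP FG; apply/lab_leP => v /FG; apply: u_le_lab. Qed.

Lemma lab_U v (F : {set V}) a : (lab (v |: F) <= a)%MM = (u v <= a)%MM && (lab F <= a)%MM.
Proof.
apply/lab_leP/andP => [H|[H1 /lab_leP H2] x].
  by split; [apply: H; rewrite !inE eqxx | apply/lab_leP => x xF; apply: H; rewrite !inE xF orbT].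
by rewrite !inE => /orP [/eqP ->|]; [|apply: H2].
Qed.

Lemma lab0 : lab set0 = 0%MM.
Proof. by apply/mnmP => i; rewrite mnmE mnm0E big_pred0 // => v; rewrite inE. Qed.

Lemma coeffMX (p : {mpoly K[n]}) d k :
  (p * 'X_[d])@_k = if (d <= k)%MM then p@_(k - d) else 0.
Proof.
case: ifP => dk.
  by rewrite -{1}(submK dk) addmC mcoeffMX.
apply/eqP; rewrite mcoeff_eq0 (perm_mem (msuppMX p d)); apply/negP => /mapP [m' _ km].
by rewrite km lem_addr in dk.
Qed.

Lemma mnm_arith (x y a : 'X_{1..n}) : (x <= y)%MM -> (x <= a)%MM ->
  ((y - x <= a - x)%MM = (y <= a)%MM) /\ ((y <= a)%MM -> (a - x - (y - x) = a - y)%MM).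
Proof.
move=> /mnm_lepP xy /mnm_lepP xa; split.
  apply/mnm_lepP/mnm_lepP => H i; have := H i; have := xy i; have := xa i;
  rewrite ?mnmBE; lia.
move=> /mnm_lepP ya; apply/mnmP => i; rewrite !mnmBE.
have := xy i; have := xa i; have := ya i; lia.
Qed.


Definition pbd (c : {set V} -> {mpoly K[n]}) (G : {set V}) : {mpoly K[n]} :=
  \sum_(v | v \notin G) eps K v (v |: G) *: (c (v |: G) * 'X_[lab (v |: G) - lab G]).

Definition gam (a : 'X_{1..n}) (c : {set V} -> {mpoly K[n]}) (F : {set V}) : K :=
  if (lab F <= a)%MM then (c F)@_(a - lab F) else 0.

Lemma gam_pbd a c G : gam a (pbd c) G = bd (gam a c) G.
Proof.
rewrite /gam /bd; case: ifP => Ga.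
  rewrite (big_morph (mcoeff (a - lab G)) (mcoeffD _) (mcoeff0 _ _)); apply: eq_bigr => v vG.
  rewrite mcoeffZ coeffMX.
  have [H1 H2] := mnm_arith (lab_sub (subsetUr [set v] G)) Ga.
  rewrite H1; case: ifP => // va; by rewrite H2.
rewrite big1 // => v _; by rewrite lab_U Ga andbF mulr0.
Qed.

Lemma gam_ext c c' : (forall a F, gam a c F = gam a c' F) -> forall F, c F = c' F.
Proof.
move=> H F; apply/mpolyP => b; have := H (b + lab F)%MM F.
by rewrite /gam lem_addl addmK.
Qed.

Lemma pbd_eq c c' G : c =1 c' -> pbd c G = pbd c' G.
Proof. by move=> e; apply: eq_bigr => v _; rewrite e. Qed.

Lemma pbdpbd c G : pbd (pbd c) G = 0.
Proof.
apply: (@gam_ext _ (fun _ => 0)) => a F.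
rewrite gam_pbd (bd_eq _ (gam_pbd a c)) bdbd /gam; case: ifP => //.
by rewrite mcoeff0.
Qed.

Variable D : pred {set V}.
Hypothesis Ddown : forall F G : {set V}, D F -> G \subset F -> D G.
Definition coneP a x := [forall F, D F ==> (lab F <= a)%MM ==> D (x |: F)] && (u x <= a)%MM.
Hypothesis cone : forall a F0, D F0 -> F0 != set0 -> (lab F0 <= a)%MM -> exists x, coneP a x.

Definition supp k (c : {set V} -> {mpoly K[n]}) := forall F, c F != 0 -> D F && (#|F| == k).

Lemma pbd_supp k c : supp k.+1 c -> supp k (pbd c).
Proof.
move=> sc G; apply: contraR => H; apply/eqP; apply: big1 => v vG.
suff -> : c (v |: G) = 0 by rewrite mul0r scaler0.
apply/eqP; apply: contraNT H => /sc /andP [DF cF].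
rewrite (Ddown DF (subsetUr _ _)) /=; rewrite cardsU1 vG in cF.
by rewrite add1n eqSS in cF.
Qed.

Lemma exact_step k c : supp k.+1 c -> (forall G, pbd c G = 0) ->
  exists d, supp k.+2 d /\ (forall F, c F = pbd d F).
Proof.
move=> sc cyc.
pose A := undup [seq (b + lab F)%MM | F <- enum [set: {set V}], b <- msupp (c F)].
pose ap a := [pick x | coneP a x].
pose del a : {set V} -> K := if ap a is Some x then hom x (gam a c) else (fun _ => 0).
pose d F := \sum_(a <- A) del a F *: ('X_[a - lab F] : {mpoly K[n]}).
have gamA : forall a F, gam a c F != 0 -> a \in A.
  move=> a F; rewrite /gam; case: ifP => [aF nz|]; last by rewrite eqxx.
  rewrite mem_undup; apply/allpairsPdep; exists F, (a - lab F)%MM; split.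
  - by rewrite mem_enum inE.
  - by rewrite mcoeff_msupp.
  - by rewrite submK.
have gamC : forall a F, gam a c F != 0 -> exists x, coneP a x.
  move=> a F; rewrite /gam; case: ifP => [aF nz|]; last by rewrite eqxx.
  have cF0 : c F != 0 by apply: contraNneq nz => ->; rewrite mcoeff0.
  have /andP [DF cF] := sc _ cF0.
  apply: (cone DF _ aF); apply: contraTneq cF => ->; by rewrite cards0.
have delS : forall a F, del a F != 0 -> [&& D F, #|F| == k.+2 & (lab F <= a)%MM].
  move=> a F; rewrite /del /ap; case: pickP => [x cp|]; last by rewrite eqxx.
  rewrite /hom; case: ifP => [xF|]; last by rewrite eqxx.
  rewrite /gam; case: ifP => [la|]; last by rewrite mulr0 eqxx.
  move=> nz; have /andP [DF cF] : D (F :\ x) && (#|F :\ x| == k.+1).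
    by apply: sc; apply: contraNneq nz => ->; rewrite mcoeff0 mulr0.
  move: cp => /andP [/forallP cp ux].
  have := cp (F :\ x); rewrite DF la /= setD1K // => ->.
  rewrite /=; apply/andP; split; first by rewrite (cardsD1 x F) xF (eqP cF).
  by rewrite -(setD1K xF) lab_U ux la.
have gamd : forall a F, gam a d F = if a \in A then del a F else 0.
  move=> a' F; rewrite /gam; case: ifP => Fa.
    rewrite (big_morph (mcoeff (a' - lab F)) (mcoeffD _) (mcoeff0 _ _)).
    rewrite (eq_bigr (fun b => if b == a' then del a' F else 0)); last first.
      move=> b _; rewrite mcoeffZ mcoeffX.
      case: (eqVneq (del b F) 0) => [e|nz].
        by rewrite e mul0r; case: (eqVneq b a') => [eb|] //; rewrite -eb e.
      have /and3P [_ _ Fb] := delS _ _ nz.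
      case: (eqVneq b a') => [->|nba]; first by rewrite eqxx mulr1.
      suff -> : (b - lab F == a' - lab F)%MM = false by rewrite mulr0.
      apply: contraNF nba => /eqP e; apply/eqP.
      by rewrite -(submK Fb) -(submK Fa) e.
    rewrite -big_mkcond /= -big_filter; case: ifP => aA.
      by rewrite filter_pred1_uniq ?undup_uniq // big_seq1.
    rewrite big1_seq // => b /andP [_]; rewrite mem_filter => /andP [/eqP -> ]; by rewrite aA.
  case: ifP => // _; apply/eqP; apply: contraFT Fa => nz.
  by rewrite eq_sym in nz; have /and3P [] := delS _ _ nz.
exists d; split.
  move=> F nz; case: (boolP (has (fun a => del a F != 0) A)) => [/hasP [a aA dnz]|/hasPn H].
    by have /and3P [-> -> _] := delS _ _ dnz.
  move: nz; rewrite /d big1_seq ?eqxx // => a /andP [_ aA].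
  by have := H a aA; rewrite negbK => /eqP ->; rewrite scale0r.
move=> F; apply: gam_ext => a G.
have E : gam a d =1 (if a \in A then del a else fun _ => 0).
  by move=> F'; rewrite gamd; case: (a \in A).
rewrite gam_pbd (bd_eq _ E); case: ifP => aA.
  rewrite /del /ap; case: pickP => [x cp|none].
    rewrite -[LHS](homotopy x); suff -> : hom x (bd (gam a c)) G = 0 by rewrite addr0.
    rewrite /hom; case: ifP => // _; rewrite -gam_pbd /gam.
    by case: ifP => _; rewrite ?cyc ?mcoeff0 mulr0.
  have z : forall F', gam a c F' = 0.
    move=> F'; apply/eqP; apply: contraT => nz; have [x cx] := gamC _ _ nz.
    by have := none x; rewrite cx.
  by rewrite z /bd big1 // => v _; rewrite mulr0.
have -> : gam a c G = 0.
  by apply/eqP; apply: contraT => nz; have := gamA _ _ nz; rewrite aA.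
by rewrite /bd big1 // => v _; rewrite mulr0.
Qed.
End Poly.


Section Mat.
Variable K : fieldType.
Variable n : nat.
Variable V : finType.
Variable u : V -> 'X_{1..n}.
Variable D : pred {set V}.
Hypothesis Ddown : forall F G : {set V}, D F -> G \subset F -> D G.
Hypothesis cone : forall a F0, D F0 -> F0 != set0 -> (lab u F0 <= a)%MM -> exists x, coneP u D a x.

Local Notation S := {mpoly K[n]}.
Definition Phi i := [set F : {set V} | D F && (#|F| == i.+1)].
Definition bb i := #|Phi i|.
Definition ev i (r : 'I_(bb i)) : {set V} := enum_val r.

Definition chn i (v : 'rV[S]_(bb i)) (F : {set V}) : S := \sum_(r | ev r == F) v 0 r.
Definition vec i (c : {set V} -> S) : 'rV[S]_(bb i) := \row_r c (ev r).
Definition coef (F G : {set V}) : S :=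
  \sum_(w | (w \notin G) && (w |: G == F)) eps K w F *: 'X_[lab u F - lab u G].
Definition Dm i : 'M[S]_(bb i.+1, bb i) := \matrix_(r, s) coef (ev r) (ev s).
Definition em : 'cV[S]_(bb 0) := \matrix_(r, s) coef (ev r) set0.

Lemma ev_Phi i r : ev (i:=i) r \in Phi i.
Proof. exact: enum_valP. Qed.

Lemma mul_coef i (v : 'rV[S]_(bb i)) G :
  \sum_r v 0 r * coef (ev r) G = pbd u (chn v) G.
Proof.
rewrite /coef /pbd /chn.
under eq_bigr => r _ do rewrite mulr_sumr.
rewrite (exchange_big_dep (fun w => w \notin G)) /=; last by move=> r w _ /andP [].
apply: eq_bigr => w wG; rewrite mulr_suml scaler_sumr.
apply: eq_big => [r|r /andP [_ /eqP e]]; first by rewrite wG /= eq_sym.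
by rewrite -e scalerAr.
Qed.

Lemma chn_supp i (v : 'rV[S]_(bb i)) : supp D i.+1 (chn v).
Proof.
move=> F nz; have [r /eqP rF|H] := pickP (fun r : 'I_(bb i) => ev r == F).
  by have := ev_Phi r; rewrite rF inE.
by rewrite /chn big_pred0 ?eqxx in nz.
Qed.

Lemma vecK i (v : 'rV[S]_(bb i)) : vec i (chn v) = v.
Proof.
apply/rowP => s; rewrite mxE /chn (big_pred1 s) ?ord1 //.
by move=> r; apply/eqP/eqP => [/enum_val_inj|->].
Qed.

Lemma chnK i c : supp D i.+1 c -> forall F, chn (vec i c) F = c F.
Proof.
move=> sc F; rewrite /chn; case: (boolP (F \in Phi i)) => FP.
  rewrite (big_pred1 (enum_rank_in FP F)).
    by rewrite mxE /ev enum_rankK_in.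
  move=> r; apply/eqP/eqP => [e|->]; first by apply: enum_val_inj; rewrite enum_rankK_in.
  by rewrite /ev enum_rankK_in.
rewrite big_pred0; last first.
  by move=> r; apply: contraNF FP => /eqP <-; apply: ev_Phi.
apply/esym/eqP; apply: contraR FP => /sc; by rewrite inE.
Qed.

Lemma vec_eq i c c' : c =1 c' -> vec i c = vec i c'.
Proof. by move=> e; apply/rowP => s; rewrite !mxE e. Qed.

Lemma mulDm i (v : 'rV[S]_(bb i.+1)) : v *m Dm i = vec i (pbd u (chn v)).
Proof.
apply/rowP => s; rewrite !mxE -mul_coef; apply: eq_bigr => r _; by rewrite mxE.
Qed.

Lemma mulem (v : 'rV[S]_(bb 0)) : (v *m em) 0 0 = pbd u (chn v) set0.
Proof.
rewrite !mxE -mul_coef; apply: eq_bigr => r _; by rewrite mxE.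
Qed.

Lemma chn0 i : chn (0 : 'rV[S]_(bb i)) =1 (fun _ => 0).
Proof. by move=> F; rewrite /chn big1 // => r _; rewrite mxE. Qed.

Lemma vec0 i : vec i (fun _ => 0) = 0.
Proof. by apply/rowP => s; rewrite !mxE. Qed.

Lemma exactD i (v : 'rV[S]_(bb i.+1)) :
  v *m Dm i = 0 <-> exists w : 'rV[S]_(bb i.+2), v = w *m Dm i.+1.
Proof.
split.
  rewrite mulDm => H.
  have cyc : forall G, pbd u (chn v) G = 0.
    move=> G; rewrite -(chnK (pbd_supp Ddown (chn_supp (v:=v)))) H; exact: chn0.
  have [d [sd e]] := exact_step cone (chn_supp (v:=v)) cyc.
  exists (vec i.+2 d); rewrite mulDm -[LHS]vecK; apply: vec_eq => F.
  by rewrite e; apply: pbd_eq => F'; rewrite chnK.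
move=> [w ->]; rewrite mulDm -(vec0 i); apply: vec_eq => G.
rewrite mulDm.
transitivity (pbd u (pbd u (chn w)) G); last exact: pbdpbd.
apply: pbd_eq; exact: (chnK (pbd_supp Ddown (chn_supp (v:=w)))).
Qed.

Lemma exactE (v : 'rV[S]_(bb 0)) :
  v *m em = 0 <-> exists w : 'rV[S]_(bb 1), v = w *m Dm 0.
Proof.
have -> : (v *m em = 0) <-> (forall G, pbd u (chn v) G = 0).
  split => [H G|H].
    case: (eqVneq G set0) => [->|nG]; first by rewrite -mulem H mxE.
    apply/eqP; apply: contraR nG => /(pbd_supp Ddown (chn_supp (v:=v))) /andP [_].
    by rewrite cards_eq0.
  by apply/matrixP => r s; rewrite !ord1 mulem H mxE.
split => [cyc|[w ->] G].
  have [d [sd e]] := exact_step cone (chn_supp (v:=v)) cyc.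
  exists (vec 1 d); rewrite mulDm -[LHS]vecK; apply: vec_eq => F.
  by rewrite e; apply: pbd_eq => F'; rewrite chnK.
rewrite mulDm.
transitivity (pbd u (pbd u (chn w)) G); last exact: pbdpbd.
apply: pbd_eq; exact: (chnK (pbd_supp Ddown (chn_supp (v:=w)))).
Qed.

End Mat.


Section Conc.
Variable K : fieldType.
Variables n q : nat.
Variable m : 'I_q -> 'X_{1..n}.
Local Notation V := ('I_q * 'I_q)%type.
Local Notation S := {mpoly K[n]}.
Definition uu (p : V) : 'X_{1..n} := (m p.1 + m p.2)%MM.
Definition DD : pred {set V} := fun F => Mq2_face F.

Lemma DDdown (F G : {set V}) : DD F -> G \subset F -> DD G.
Proof.
move=> /existsP [i Fi] GF; apply/existsP; exists i; exact: subset_trans Fi.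
Qed.

Lemma DDcone a F0 : DD F0 -> F0 != set0 -> (lab uu F0 <= a)%MM -> exists x, coneP uu DD a x.
Proof.
move=> /existsP [i0 F0i0] nF0 la.
case: (pickP (fun o : V => (o.1 < o.2)%N && (uu o <= a)%MM)) => [o /andP [lo uo] | none].
  exists o; apply/andP; split => //; apply/forallP => F; apply/implyP => /existsP [i Fi].
  apply/implyP => _; apply/existsP; exists i; rewrite subUset sub1set Fi andbT inE lo.
  by [].
have key : forall i j : 'I_q, (uu (i,i) <= a)%MM -> (uu (j,j) <= a)%MM -> i = j.
  move=> i j /mnm_lepP hi /mnm_lepP hj; case: (ltngtP i j) => [ij|ji|/val_inj //].
    have := none (i, j); rewrite /= ij /=; move/negbT => /negP []; apply/mnm_lepP => k.
    by have := hi k; have := hj k; rewrite /uu !mnmDE /=; lia.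
  have := none (j, i); rewrite /= ji /=; move/negbT => /negP []; apply/mnm_lepP => k.
  by have := hi k; have := hj k; rewrite /uu !mnmDE /=; lia.
have [w wF0] := set0Pn _ nF0.
have uw : (uu w <= a)%MM by apply: lepm_trans (u_le_lab uu wF0) la.
have ew : w = (i0, i0).
  have := subsetP F0i0 _ wF0; rewrite inE => /orP [lw|/eqP //].
  by have := none w; rewrite lw uw.
exists w; apply/andP; split => //; apply/forallP => F; apply/implyP => /existsP [i Fi].
apply/implyP => /lab_leP lF; apply/existsP; exists i0; apply/subsetP => x.
rewrite !inE => /orP [/eqP ->|xF]; first by rewrite ew eqxx orbT.
have := subsetP Fi _ xF; rewrite inE => /orP [lx|/eqP ex].
  by have := none x; rewrite lx lF.
have := lF _ xF; rewrite ex => ui.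
have := key _ _ ui; rewrite ew in uw => /(_ _ uw) ->.
by rewrite eqxx orbT.
Qed.


Lemma lab_set1 (w : V) : lab uu [set w] = uu w.
Proof. by apply/mnmP => i; rewrite mnmE big_set1. Qed.

Lemma pbd_set0 (c : {set V} -> S) : pbd uu c set0 = \sum_w c [set w] * 'X_[uu w].
Proof.
rewrite /pbd; apply: eq_big => [w|w _]; first by rewrite in_set0.
rewrite eps_self /eps.
have -> : [set w0 in set0 | ltV w0 w] = set0 :> {set V}.
  by apply/setP => x; rewrite !inE.
by rewrite cards0 expr0 scale1r setU0 lab_set1 lab0 subm0.
Qed.

Definition srt (p : V) : V := if (p.1 <= p.2)%N then p else (p.2, p.1).

Lemma srt_face (p : V) : DD [set srt p].
Proof.
apply/existsP; exists p.1; rewrite sub1set inE /srt.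
case: p => a b /=; case: (ltngtP a b) => [ab|ba|/val_inj ->] /=.
- by rewrite ab.
- by rewrite ba.
- by rewrite eqxx orbT.
Qed.

Lemma uu_srt p : uu (srt p) = uu p.
Proof. by rewrite /srt; case: ifP => //= _; rewrite /uu addmC. Qed.

Lemma ideal_char (f : S) :
  ideal_sq (ideal_gen (fun i => 'X_[m i] : S)) f <->
  exists c, supp DD 1 c /\ f = \sum_w c [set w] * 'X_[uu w].
Proof.
split.
  move=> [k [a [b [Hab ->]]]].
  have [ca Hca] := fin_all_exists (fun i => proj1 (Hab i)).
  have [cb Hcb] := fin_all_exists (fun i => proj2 (Hab i)).
  pose g (p : V) := \sum_(r < k) ca r p.1 * cb r p.2.
  have E : \sum_(r < k) a r * b r = \sum_p g p * 'X_[uu p].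
    transitivity (\sum_(r < k) \sum_(p : V) ca r p.1 * cb r p.2 * 'X_[uu p]).
      apply: eq_bigr => r _; rewrite Hca Hcb mulr_suml.
      transitivity (\sum_i \sum_j ca r i * cb r j * 'X_[uu (i, j)]); last first.
        by rewrite pair_bigA; apply: eq_bigr => -[i j].
      apply: eq_bigr => i _; rewrite mulr_sumr.
      apply: eq_bigr => j _; rewrite /uu mpolyXD; ring.
    rewrite exchange_big; apply: eq_bigr => p _; by rewrite /g mulr_suml.
  exists (fun F => \sum_(p | [set srt p] == F) g p); split.
    move=> F nz; have [p /eqP <-|H] := pickP (fun p : V => [set srt p] == F).
      by rewrite srt_face cards1.
    by rewrite big_pred0 ?eqxx in nz.
  rewrite E (partition_big srt predT) //=; apply: eq_bigr => w _.
  rewrite mulr_suml; apply: eq_big => [p|p /eqP <-]; last by rewrite uu_srt.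
  by apply/eqP/eqP => [->|e] //; apply: set1_inj.
move=> [c [_ ->]].
exists #|{: V}|, (fun r => c [set enum_val r] * 'X_[m (enum_val r).1]),
  (fun r => 'X_[m (enum_val r).2]); split.
  move=> r; split.
    exists (fun j => if j == (enum_val r).1 then c [set enum_val r] else 0).
    rewrite (bigD1 (enum_val r).1) //= eqxx big1 ?addr0 // => j /negbTE ->.
    by rewrite mul0r.
  exists (fun j => if j == (enum_val r).2 then 1 else 0).
  rewrite (bigD1 (enum_val r).2) //= eqxx mul1r big1 ?addr0 // => j /negbTE ->.
  by rewrite mul0r.
rewrite (eq_bigl (fun w => w \in {: V})) // big_enum_val /=.
by apply: eq_bigr => r _; rewrite /uu mpolyXD mulrA.
Qed.

End Conc.

Lemma card_offd q : #|[set p : 'I_q * 'I_q | (p.1 < p.2)%N]| = 'C(q, 2).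
Proof.
transitivity (\sum_(p : 'I_q * 'I_q) ((p.1 < p.2)%N : nat))%N.
  rewrite -sum1_card big_mkcond /=; apply: eq_bigr => p _; rewrite inE; by case: ifP.
rewrite -(pair_bigA _ (fun i j : 'I_q => ((i < j)%N : nat))) /= exchange_big /=.
transitivity (\sum_(j < q) (j : nat))%N; last by rewrite -(big_mkord xpredT (fun j => j)) bin2_sum.
apply: eq_bigr => j _.
rewrite -(big_mkord xpredT (fun i => ((i < j)%N : nat))).
rewrite (big_cat_nat (leq0n j) (ltnW (ltn_ord j))) /=.
rewrite [X in (_ + X)%N]big_nat_cond [X in (_ + X)%N]big1 ?addn0; last first.
  by move=> i /andP [/andP [ji _] _]; rewrite ltnNge ji.
rewrite big_nat_cond (eq_bigr (fun _ => 1%N)); last by move=> i /andP [/andP [_ ->] _].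
by rewrite -big_nat_cond sum_nat_const_nat muln1 subn0.
Qed.

Lemma Mq2_dim_eq q : Mq2_dim q = 'C(q, 2).
Proof.
have fc : forall i : 'I_q, #|Mq2_facet i| = 'C(q,2).+1.
  move=> i; have -> : Mq2_facet i = (i,i) |: [set p : 'I_q * 'I_q | (p.1 < p.2)%N].
    by apply/setP => p; rewrite !inE orbC.
  by rewrite cardsU1 inE ltnn card_offd.
rewrite /Mq2_dim; case: (posnP q) => [q0|qpos].
  rewrite big_pred0; first by rewrite q0.
  move=> F; apply/existsP => [[i _]].
  by have := ltn_ord i; rewrite {2}q0.
suff -> : (\max_(F : {set 'I_q * 'I_q} | Mq2_face F) #|F|)%N = 'C(q, 2).+1 by [].
apply: anti_leq; apply/andP; split.
  apply/bigmax_leqP => F /existsP [i Fi]; rewrite -(fc i); exact: subset_leq_card.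
rewrite -(fc (Ordinal qpos)); apply: leq_bigmax_cond.
by apply/existsP; exists (Ordinal qpos).
Qed.

Theorem corollary3p8 (K : fieldType) (n q : nat) (m : 'I_q -> 'X_{1..n}) :
  minimal_monomial_gens m ->
  pd_le (ideal_sq (ideal_gen (fun i => 'X_[m i] : {mpoly K[n]}))) (Mq2_dim q) /\
  Mq2_dim q = 'C(q, 2).
Proof.
move=> _; split; last exact: Mq2_dim_eq.
exists (Mq2_dim q); split => //.
exists (fun i => bb (@DD q) i), (em K (uu m) (@DD q)), (fun i => Dm K (uu m) (@DD q) i).
split; [|split; [|split]].
- move=> i lt; apply/eqP; rewrite cards_eq0; apply/eqP/setP => F; rewrite inE in_set0.
  apply/negbTE/negP => /andP [DF /eqP cF].
  have := @leq_bigmax_cond _ (fun F : {set 'I_q * 'I_q} => Mq2_face F) (fun F : {set 'I_q * 'I_q} => #|F|) F DF.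
  move: lt; rewrite /Mq2_dim cF => h1 h2; move: h1; rewrite ltnNge => /negP; apply; by rewrite -ltnS (leq_trans h2) // leqSpred.
- move=> f; rewrite ideal_char; split.
    move=> [c [sc ->]]; exists (vec (@DD q) 0%N c); rewrite mulem pbd_set0.
    by apply: eq_bigr => w _; rewrite chnK.
  move=> [v ->]; exists (chn v); split; first exact: chn_supp.
  by rewrite mulem pbd_set0.
- exact: (exactE (@DDdown q) (@DDcone n q m)).
- exact: (exactD (@DDdown q) (@DDcone n q m)).
Qed.
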